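(* For any $\bm x \in \Delta_n \setminus \{\bm e_1,\dots,\bm e_n,\tfrac1n\bm e\}$ and any integer $p\geqslant 2$, $$\frac{p}{p-1}\left[\frac{-\ln\|\bm x\|_p}{1-\|\bm x\|_p}\right] - \ln n\left[1 + \frac{1}{D_p}\right] < 0.$$
   Context: For $\bm x \in \mathbb{R}^n_{\geqslant 0}$ and $p\geqslant 1$, $\|\bm x\|_p = (\sum_{i=1}^n x_i^p)^{1/p}$, and $D_p = n^{1-1/p}-1$. $\Delta_n = \{\bm x \in \mathbb{R}^n_{\geqslant 0} : \sum_{i=1}^n x_i = 1\}$, $\bm e_i$ is the $i$-th standard unit vector and $\bm e$ the all-ones vector in $\mathbb{R}^n$. *)

(* Defs.v *)
From HB Require Import structures.
From mathcomp Require Import all_boot all_order all_algebra.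
From mathcomp Require Import all_classical all_reals all_analysis.
Unset Printing Implicit Defensive.
Import Order.TTheory GRing.Theory Num.Theory.
Local Open Scope ring_scope.

Definition pnorm {R : realType} {n : nat} (p : R) (x : 'I_n -> R) : R :=
  powR (\sum_(i < n) powR (x i) p) (p^-1).

Definition Dp {R : realType} (n : nat) (p : R) : R :=
  powR (n%:R) (1 - p^-1) - 1.

Definition in_simplex {R : realType} {n : nat} (x : 'I_n -> R) : Prop :=
  (forall i, 0 <= x i) /\ \sum_(i < n) x i = 1.

Definition unitv {R : realType} {n : nat} (i : 'I_n) : 'I_n -> R :=
  fun j => if j == i then 1 else 0.

Definition baryc {R : realType} (n : nat) : 'I_n -> R :=
  fun _ => (n%:R)^-1.

(* Main.v *)
Require Import Defs.
From HB Require Import structures.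
From mathcomp Require Import all_boot all_order all_algebra.
From mathcomp Require Import all_classical all_reals all_analysis.
From mathcomp Require Import ring lra.
Import Order.TTheory GRing.Theory Num.Theory.
Local Open Scope ring_scope.

Section H.
Variable R : realType.

Lemma key_exp (l u : R) : 0 < l -> l < 1 -> u != 0 ->
  expR (l * u) < 1 + l * (expR u - 1).
Proof.
move=> l0 l1 u0.
set A := expR (l * u).
have A0 : 0 < A by exact: expR_gt0.
have eu : expR u = A * expR ((1 - l) * u).
  by rewrite /A -expRD; congr expR; ring.
have hB : 1 + (1 - l) * u < expR ((1 - l) * u).
  apply: expR_gt1Dx; rewrite mulf_neq0 //; lra.
have hN : 1 + (- (l * u)) < expR (- (l * u)).
  apply: expR_gt1Dx; rewrite oppr_eq0 mulf_neq0 //; lra.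
rewrite expRN -/A in hN.
have hN' : A * (1 - l * u) < 1.
  move: hN; rewrite -(ltr_pM2l A0) mulfV ?gt_eqF //.
have h2 : l * A * (1 + (1 - l) * u) < l * A * expR ((1 - l) * u).
  by rewrite ltr_pM2l // mulr_gt0.
rewrite eu.
have : 0 < (1 - l) * (1 - A * (1 - l * u)) by apply: mulr_gt0; lra.
nra.
Qed.

Lemma g_mono (a b : R) : 0 < a -> a < b -> b < 1 ->
  - ln b / (1 - b) < - ln a / (1 - a).
Proof.
move=> a0 ab b1.
set l := (1 - b) / (1 - a).
have l0 : 0 < l by apply: divr_gt0; lra.
have l1 : l < 1 by rewrite /l ltr_pdivrMr; lra.
have la : ln a != 0 by rewrite lt_eqF // ln_lt0 // a0 /=; lra.
have := @key_exp l (ln a) l0 l1 la.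
rewrite lnK ?posrE //.
have -> : 1 + l * (a - 1) = b by rewrite /l; field; lra.
move=> h0.
have h : l * ln a < ln b.
  by rewrite -ltr_expR lnK ?posrE //; lra.
rewrite /l in h.
have h' : (1 - b) * ln a < (1 - a) * ln b.
  move: h; rewrite -(@ltr_pM2l _ (1 - a)); last lra.
  have -> : (1 - a) * ((1 - b) / (1 - a) * ln a) = (1 - b) * ln a.
    by field; lra.
  done.
rewrite ltr_pdivrMr; last lra.
rewrite mulrAC ltr_pdivlMr; last lra.
nra.
Qed.

Lemma bern (k : nat) (h : R) : -1 <= h -> 1 + k%:R * h <= (1 + h) ^+ k.
Proof.
move=> h1; elim: k => [|k IH]; first by rewrite mul0r addr0 expr0.
rewrite exprSr.
have : (1 + k%:R * h) * (1 + h) <= (1 + h) ^+ k * (1 + h).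
  by rewrite ler_wpM2r //; lra.
have : 0 <= k%:R * h * h :> R by rewrite -mulrA mulr_ge0 // -expr2 sqr_ge0.
rewrite -natr1; nra.
Qed.

Lemma bern_lt (k : nat) (h : R) : -1 <= h -> h != 0 -> (1 < k)%N ->
  1 + k%:R * h < (1 + h) ^+ k.
Proof.
move=> h1 h0; case: k => [//|k] k1.
rewrite exprSr.
have : (1 + k%:R * h) * (1 + h) <= (1 + h) ^+ k * (1 + h).
  by rewrite ler_wpM2r ?bern //; lra.
have : 0 < k%:R * (h * h) :> R.
  rewrite mulr_gt0 // ?ltr0n //; last by rewrite -expr2 exprn_even_gt0.
rewrite -natr1; nra.
Qed.


Lemma xp_le (y : R) (p : nat) : 0 <= y -> y <= 1 -> (0 < p)%N -> y ^+ p <= y.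
Proof.
move=> y0 y1; case: p => [//|p] _.
rewrite exprS -[X in _ <= X]mulr1 ler_wpM2l // exprn_ile1 //.
Qed.

Lemma xp_lt (y : R) (p : nat) : 0 < y -> y < 1 -> (1 < p)%N -> y ^+ p < y.
Proof.
move=> y0 y1; case: p => [//|p] p1.
rewrite exprS -[X in _ < X]mulr1 ltr_pM2l // exprn_ilt1 ?ltW //.
by case: p p1.
Qed.

Lemma n_ge2 (n : nat) (x : 'I_n -> R) : in_simplex x ->
  (forall i : 'I_n, x <> unitv i) -> (1 < n)%N.
Proof.
case: n x => [|[|n]] x [x0 xs] xu //.
  by move: xs; rewrite big_ord0 => /eqP; rewrite eq_sym oner_eq0.
exfalso; apply: (xu ord0); apply/funext => j.
rewrite /unitv (ord1 j) eqxx.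
by move: xs; rewrite big_ord1.
Qed.

Lemma S_bounds (n : nat) (x : 'I_n -> R) (p : nat) : in_simplex x ->
  (forall i : 'I_n, x <> unitv i) -> (1 < p)%N ->
  0 < \sum_(i < n) x i ^+ p < 1.
Proof.
move=> [x0 xs] xu p1.
have x1 : forall i, x i <= 1.
  move=> i; rewrite -xs (bigD1 i) //= lerDl sumr_ge0 //.
have [[i /andP[xi0 xi1]]|hno] := pselect (exists i, 0 < x i < 1); last first.
  exfalso.
  have [[i xi]|hno1] := pselect (exists i, x i = 1).
    apply: (xu i); apply/funext => j; rewrite /unitv.
    case: eqP => [->//|/eqP ji].
    have : \sum_(k < n | k != i) x k = 0.
      by move: xs; rewrite (bigD1 i) //= xi; lra.
    move/psumr_eq0P => /(_ (fun k _ => x0 k)) /(_ j ji) //.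
  have : \sum_(i < n) x i = 0.
    apply: big1 => i _.
    have := x0 i; have := x1 i; rewrite le_eqVlt => /orP[/eqP h|h1]; first by exfalso; apply: hno1; exists i.
    rewrite le_eqVlt => /orP[/eqP <-//|h0].
    by exfalso; apply: hno; exists i; rewrite h0 h1.
  by rewrite xs => /eqP; rewrite oner_eq0.
apply/andP; split.
  rewrite (bigD1 i) //= ltr_pwDl ?exprn_gt0 // sumr_ge0 // => k _.
  by rewrite exprn_ge0.
rewrite -xs (bigD1 i) // [X in _ < X](bigD1 i) //=.
apply: ltr_leD; first exact: xp_lt.
apply: ler_sum => k _; apply: xp_le => //; exact: ltnW.
Qed.

Lemma S_gtbar (n : nat) (x : 'I_n -> R) (p : nat) : in_simplex x ->
  x <> baryc n -> (1 < p)%N -> (0 < n)%N ->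
  n%:R * (n%:R^-1) ^+ p < \sum_(i < n) x i ^+ p.
Proof.
move=> [x0 xs] xb p1 n0.
set a : R := n%:R^-1.
have nR : (0 : R) < n%:R by rewrite ltr0n.
have a0 : 0 < a by rewrite invr_gt0.
set c := p%:R * a ^+ p.
have tang : forall i, a ^+ p + c * (n%:R * x i - 1) <= x i ^+ p.
  move=> i; set h := n%:R * x i - 1.
  have xe : x i = a * (1 + h) by rewrite /h /a; field; rewrite gt_eqF.
  have hb : -1 <= h by rewrite /h; have := mulr_ge0 (ltW nR) (x0 i); lra.
  rewrite [in X in _ <= X]xe exprMn.
  have ap := exprn_gt0 p a0.
  have := @bern p h hb; rewrite -(ler_pM2l ap) /c; lra.
have tangs : forall i, x i != a -> a ^+ p + c * (n%:R * x i - 1) < x i ^+ p.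
  move=> i xia; set h := n%:R * x i - 1.
  have xe : x i = a * (1 + h) by rewrite /h /a; field; rewrite gt_eqF.
  have hb : -1 <= h by rewrite /h; have := mulr_ge0 (ltW nR) (x0 i); lra.
  have h0 : h != 0.
    apply/eqP => h0; move/eqP: xia; apply.
    by rewrite xe h0 addr0 mulr1.
  rewrite [in X in _ < X]xe exprMn.
  have ap := exprn_gt0 p a0.
  have := @bern_lt p h hb h0 p1; rewrite -(ltr_pM2l ap) /c; lra.
have sumE : \sum_(i < n) (a ^+ p + c * (n%:R * x i - 1)) = n%:R * a ^+ p.
  rewrite big_split /= sumr_const card_ord -mulr_sumr sumrB -mulr_sumr xs.
  rewrite sumr_const card_ord mulr1 subrr mulr0 addr0.
  by rewrite mulr_natl.
rewrite -sumE.
have [[j xj]|hno] := pselect (exists j, x j != a); last first.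
  exfalso; apply: xb; apply/funext => j; rewrite /baryc.
  by apply/eqP; apply: contrapT => hj; apply: hno; exists j; apply/negP.
rewrite (bigD1 j) // [X in _ < X](bigD1 j) //=.
apply: ltr_leD; first exact: tangs.
by apply: ler_sum => k _; apply: tang.
Qed.

End H.

Theorem lemma1 (R : realType) (n : nat) (x : 'I_n -> R) (p : nat) :
  in_simplex x ->
  (forall i : 'I_n, x <> unitv i) ->
  x <> baryc n ->
  (2 <= p)%N ->
  (p%:R / (p%:R - 1)) * (- ln (pnorm p%:R x) / (1 - pnorm p%:R x))
    - ln (n%:R : R) * (1 + (Dp n (p%:R : R))^-1) < 0.
Proof.
move=> hs xu xb p2.
have n2 := @n_ge2 R n x hs xu.
have [x0 xs] := hs.
have [S0 S1] := andP (@S_bounds R n x p hs xu p2).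
have Sb := @S_gtbar R n x p hs xb p2 (ltnW n2).
set S := \sum_(i < n) x i ^+ p in S0 S1 Sb.
have pE : pnorm p%:R x = expR (p%:R^-1 * ln S).
  rewrite /pnorm (eq_bigr (fun i => x i ^+ p)); last by move=> i _; rewrite powR_mulrn.
  by rewrite /powR gt_eqF.
have nR : (1 : R) < n%:R by rewrite ltr1n.
have pR : (1 : R) < p%:R by rewrite ltr1n.
set L := ln (n%:R : R).
have L0 : 0 < L by apply: ln_gt0.
set K : R := 1 - p%:R^-1.
have K0 : 0 < K by rewrite /K subr_gt0 invf_lt1 //; lra.
have DE : Dp n (p%:R : R) = expR (K * L) - 1.
  by rewrite /Dp /powR gt_eqF //; lra.
have lnS : L - p%:R * L < ln S.
  have -> : L - p%:R * L = ln (n%:R * (n%:R^-1) ^+ p).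
    rewrite lnM ?posrE ?exprn_gt0 ?invr_gt0 //; try lra.
    rewrite lnXn ?invr_gt0 //; last lra.
    by rewrite lnV ?posrE -/L; [rewrite mulNrn -mulr_natl; ring | lra].
  by rewrite ltr_ln // posrE // mulr_gt0 ?exprn_gt0 ?invr_gt0 //; lra.
have lnS0 : ln S < 0 by apply: ln_lt0; rewrite S0 S1.
set t := pnorm p%:R x.
have t1 : t < 1.
  rewrite /t pE -[X in _ < X]expR0 ltr_expR pmulr_rlt0 // invr_gt0; lra.
have ta : expR (- (K * L)) < t.
  rewrite /t pE ltr_expR /K.
  rewrite -(@ltr_pM2l R p%:R); last lra.
  have -> : (p%:R : R) * (p%:R^-1 * ln S) = ln S by field; rewrite gt_eqF //; lra.
  have -> : (p%:R : R) * - ((1 - p%:R^-1) * L) = L - p%:R * L by field; rewrite gt_eqF //; lra.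
  exact: lnS.
have g := @g_mono R _ _ (expR_gt0 _) ta t1.
rewrite expRK opprK expRN in g.
set m := expR (K * L) in DE g.
have m1 : 1 < m by rewrite /m -expR0 ltr_expR mulr_gt0.
rewrite DE subr_lt0.
have -> : L * (1 + (m - 1)^-1) = (p%:R / (p%:R - 1)) * (K * L / (1 - m^-1)).
  rewrite /K; field.
  by rewrite !subr_eq0 !gt_eqF //; lra.
rewrite ltr_pM2l //; apply: divr_gt0; lra.
Qed.
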